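(* Let $g_A(w)=\exp\!\left(-\tfrac23\operatorname{Re} w^{3/2}\right)$ with the principal branch of $w^{3/2}$ (cut along $(-\infty,0]$). If $z\in\mathbb{C}\setminus\mathbb{R}$, then the map $x\mapsto g_A(x-z)$, $x\in[0,\infty)$, is decreasing. If $z\in\mathbb{R}$, then $g_A(x-z)=1$ for $x\in[0,z]$ and $x\mapsto g_A(x-z)$ is decreasing for $x\in(z,\infty)$. *)

(* Defs.v *)
From Stdlib Require Import Reals.
From Coquelicot Require Import Coquelicot.
Open Scope R_scope.

(* Principal argument Arg w in (-PI, PI] for w <> 0:
   acos(Re w / |w|) if Im w >= 0, and -acos(Re w / |w|) if Im w < 0.
   (On the cut (-oo,0) this gives PI.)  Value at w = 0 is irrelevant. *)
Definition Arg (w : C) : R :=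
  if Rle_dec 0 (Im w) then acos (Re w / Cmod w) else - acos (Re w / Cmod w).

(* Principal branch w^{3/2} = exp((3/2) Log w), cut along (-oo,0]; 0^{3/2} = 0. *)
Definition cpow32 (w : C) : C :=
  if Ceq_dec w 0 then 0
  else (Rpower (Cmod w) (3/2) * cos (3/2 * Arg w),
        Rpower (Cmod w) (3/2) * sin (3/2 * Arg w)).

Definition gA (w : C) : R := exp (- (2/3) * Re (cpow32 w)).

(* Main.v *)
Require Import Defs.
From Stdlib Require Import Reals Lra Psatz.
From Coquelicot Require Import Coquelicot.
Open Scope R_scope.

Definition F (u r : R) : R := (2 * u - r) * sqrt ((r + u) / 2).

Lemma cos3half (u r : R) : 0 < r -> Rabs u <= r ->
  cos (3/2 * acos (u / r)) = sqrt ((1 + u / r) / 2) * (2 * (u / r) - 1).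
Proof.
  intros Hr Hu.
  assert (Hb : -1 <= u / r <= 1).
  { unfold Rabs in Hu; destruct (Rcase_abs u); split.
    all: apply (Rmult_le_reg_r r); [lra| unfold Rdiv; rewrite Rmult_assoc, Rinv_l by lra; lra]. }
  set (p := acos (u / r)).
  assert (Hc : cos p = u / r) by (apply cos_acos; auto).
  assert (Hp : 0 <= p <= PI) by apply acos_bound.
  set (a := p / 2).
  assert (Hpa : p = 2 * a) by (unfold a; field).
  assert (H3 : 3 / 2 * p = 2 * a + a) by (rewrite Hpa; field).
  rewrite H3, cos_plus, sin_2a.
  rewrite Hpa in Hc.
  assert (Hca : 0 <= cos a) by (apply cos_ge_0; unfold a; lra).
  assert (Hc2 : cos a * cos a = (1 + u / r) / 2) by (rewrite cos_2a_cos in Hc; lra).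
  assert (Hs : sqrt ((1 + u / r) / 2) = cos a) by (apply sqrt_lem_1; lra).
  rewrite Hs, <- Hc, cos_2a_cos.
  pose proof (sin2_cos2 a). unfold Rsqr in *. nra.
Qed.

Lemma Re_cpow32 (w : C) : Re (cpow32 w) = F (Re w) (Cmod w).
Proof.
  unfold cpow32, F. destruct (Ceq_dec w 0) as [E|E].
  - subst. rewrite Cmod_0. simpl. replace ((0+0)/2) with 0 by field. rewrite sqrt_0. ring.
  - apply Cmod_gt_0 in E. simpl.
    pose proof (re_le_Cmod w) as Hu.
    set (r := Cmod w) in *. set (u := Re w) in *.
    assert (Hcos : cos (3 / 2 * Arg w) = cos (3/2 * acos (u / r))).
    { unfold Arg. destruct (Rle_dec 0 (Im w)); auto.
      replace (3 / 2 * - acos (Re w / Cmod w)) with (- (3/2 * acos (u/r))) by (unfold u, r; ring).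
      apply cos_neg. }
    rewrite Hcos, cos3half by auto.
    replace (3/2) with (1 + /2) by field.
    rewrite Rpower_plus, Rpower_1, Rpower_sqrt by auto.
    replace ((r + u) / 2) with (r * ((1 + u / r) / 2)) by (field; lra).
    rewrite sqrt_mult_alt by lra. field. lra.
Qed.

Lemma gA_eq (x : R) (z : C) :
  gA (RtoC x - z) = exp (- (2/3) * F (x - Re z) (sqrt ((x - Re z) ^ 2 + Im z ^ 2))).
Proof.
  unfold gA. rewrite Re_cpow32. destruct z as [a b]. unfold Cmod. simpl.
  f_equal. f_equal. f_equal. f_equal. ring.
Qed.

Lemma F_incr (b u1 u2 : R) : b <> 0 -> u1 < u2 ->
  F u1 (sqrt (u1 ^ 2 + b ^ 2)) < F u2 (sqrt (u2 ^ 2 + b ^ 2)).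
Proof.
  intros Hb Hu. unfold F.
  assert (Hb2 : 0 < b * b) by (apply Rsqr_pos_lt; auto).
  assert (R1 : sqrt (u1 ^ 2 + b ^ 2) * sqrt (u1 ^ 2 + b ^ 2) = u1 ^ 2 + b ^ 2)
    by (apply sqrt_sqrt; nra).
  assert (R2 : sqrt (u2 ^ 2 + b ^ 2) * sqrt (u2 ^ 2 + b ^ 2) = u2 ^ 2 + b ^ 2)
    by (apply sqrt_sqrt; nra).
  pose proof (sqrt_pos (u1 ^ 2 + b ^ 2)). pose proof (sqrt_pos (u2 ^ 2 + b ^ 2)).
  set (r1 := sqrt (u1 ^ 2 + b ^ 2)) in *. set (r2 := sqrt (u2 ^ 2 + b ^ 2)) in *.
  assert (A1 : 0 < r1 + u1 /\ 0 < r1 - u1) by (split; nra).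
  assert (A2 : 0 < r2 + u2 /\ 0 < r2 - u2) by (split; nra).
  assert (Hlt : r1 + u1 < r2 + u2).
  { destruct (Rlt_or_le (r1 + u1) (r2 + u2)) as [h|h]; auto. exfalso.
    assert (r2 - r1 <= u1 - u2) by lra.
    assert ((r1 - r2) * (r1 + r2) = (u1 - u2) * (u1 + u2)) by nra.
    nra. }
  assert (T1 : 0 < sqrt ((r1 + u1) / 2)) by (apply sqrt_lt_R0; lra).
  assert (T2 : 0 < sqrt ((r2 + u2) / 2)) by (apply sqrt_lt_R0; lra).
  assert (Tlt : sqrt ((r1 + u1) / 2) < sqrt ((r2 + u2) / 2)) by (apply sqrt_lt_1; lra).
  assert (S1 : sqrt ((r1 + u1) / 2) * sqrt ((r1 + u1) / 2) = (r1 + u1) / 2) by (apply sqrt_sqrt; lra).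
  assert (S2 : sqrt ((r2 + u2) / 2) * sqrt ((r2 + u2) / 2) = (r2 + u2) / 2) by (apply sqrt_sqrt; lra).
  set (t1 := sqrt ((r1 + u1) / 2)) in *. set (t2 := sqrt ((r2 + u2) / 2)) in *.
  set (k := 3 * (b * b) / 4).
  assert (E1 : (2 * u1 - r1) * t1 = t1 ^ 3 - k / t1).
  { apply (Rmult_eq_reg_r t1); [| lra]. unfold k. field_simplify; [|lra].
    replace (t1 ^ 4) with ((t1 * t1) * (t1 * t1)) by ring. rewrite S1.
    replace (t1 ^ 2) with (t1 * t1) by ring. rewrite S1.
    replace (b ^ 2) with (r1 * r1 - u1 ^ 2) by nra. field. }
  assert (E2 : (2 * u2 - r2) * t2 = t2 ^ 3 - k / t2).
  { apply (Rmult_eq_reg_r t2); [| lra]. unfold k. field_simplify; [|lra].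
    replace (t2 ^ 4) with ((t2 * t2) * (t2 * t2)) by ring. rewrite S2.
    replace (t2 ^ 2) with (t2 * t2) by ring. rewrite S2.
    replace (b ^ 2) with (r2 * r2 - u2 ^ 2) by nra. field. }
  rewrite E1, E2.
  assert (0 < k) by (unfold k; lra).
  assert (/ t2 < / t1) by (apply Rinv_lt_contravar; nra).
  assert (t1 ^ 3 < t2 ^ 3) by (simpl; nra).
  unfold Rdiv. nra.
Qed.

Lemma F_real (u : R) : F u (sqrt (u ^ 2 + 0 ^ 2)) = if Rle_dec u 0 then 0 else u * sqrt u.
Proof.
  unfold F. replace (u ^ 2 + 0 ^ 2) with (Rsqr u) by (unfold Rsqr; ring).
  rewrite sqrt_Rsqr_abs. destruct (Rle_dec u 0).
  - rewrite Rabs_left1 by auto. replace ((- u + u) / 2) with 0 by field. rewrite sqrt_0. ring.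
  - rewrite Rabs_right by lra. replace ((u + u) / 2) with u by field. ring.
Qed.

Theorem lemma2p2 (z : C) :
  (Im z <> 0 ->
     forall x y : R, 0 <= x -> x < y ->
       gA (RtoC x - z) > gA (RtoC y - z)) /\
  (Im z = 0 ->
     (forall x : R, 0 <= x -> x <= Re z -> gA (RtoC x - z) = 1) /\
     (forall x y : R, Re z < x -> x < y ->
       gA (RtoC x - z) > gA (RtoC y - z))).
Proof.
  split.
  - intros Hb x y _ Hxy. rewrite !gA_eq. apply exp_increasing.
    pose proof (F_incr (Im z) (x - Re z) (y - Re z) Hb ltac:(lra)). lra.
  - intros Hb. split.
    + intros x _ Hx. rewrite gA_eq, Hb, F_real.
      destruct (Rle_dec (x - Re z) 0); [| lra]. rewrite Rmult_0_r. apply exp_0.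
    + intros x y Hx Hxy. rewrite !gA_eq, Hb, !F_real. apply exp_increasing.
      destruct (Rle_dec (x - Re z) 0); [lra|]. destruct (Rle_dec (y - Re z) 0); [lra|].
      assert (sqrt (x - Re z) < sqrt (y - Re z)) by (apply sqrt_lt_1; lra).
      assert (0 < sqrt (x - Re z)) by (apply sqrt_lt_R0; lra).
      nra.
Qed.
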